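(* For $n>2$, the assignment $\omega(a_{ij})=a_{ij}$ if $n+1\notin\{i,j\}$, $\omega(a_{i,n+1})=\tau_i$ for $i\le n$, extends to a well-defined group homomorphism $\omega\colon G_{n+1}^2\to G_{n,\mathcal{D}}^2$.
   Context: $G_{N}^2$ is the group with generators $a_{ij}=a_{\{i,j\}}$ for $2$-element subsets $\{i,j\}\subset\{1,\dots,N\}$ and relations $a_{ij}^2=1$; $a_{ij}a_{kl}=a_{kl}a_{ij}$ for distinct $i,j,k,l$; $a_{ij}a_{ik}a_{jk}=a_{jk}a_{ik}a_{ij}$ for distinct $i,j,k$. $G_{n,\mathcal{D}}^2$ has generators $a_{ij}$ ($\{i,j\}\subset\{1,\dots,n\}$) and $\tau_i$ ($1\le i\le n$) with relations: $a_{ij}^2=1$; $a_{ij}a_{kl}=a_{kl}a_{ij}$ for distinct $i,j,k,l$; $a_{ij}a_{ik}a_{jk}=a_{jk}a_{ik}a_{ij}$ for distinct $i,j,k$; $\tau_i^2=1$; $\tau_i\tau_j=\tau_j\tau_i$; $\tau_i\tau_ja_{ij}\tau_j\tau_i=a_{ij}$; $a_{ij}\tau_k=\tau_ka_{ij}$ for distinct $i,j,k$. *)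

(* Defs.v *)
From mathcomp Require Import all_boot.
Set Implicit Arguments. Unset Strict Implicit. Unset Printing Implicit Defensive.

(** * Words over an alphabet X: letters (x, false) = x, (x, true) = x^-1. *)
Definition word (X : Type) := seq (X * bool).

Definition winv (X : Type) (w : word X) : word X :=
  rev (map (fun p => (p.1, ~~ p.2)) w).

Definition wsubst (X Y : Type) (f : X -> word Y) (w : word X) : word Y :=
  flatten (map (fun p => if p.2 then winv (f p.1) else f p.1) w).

(** Equality in the group presented by generators X and relations R
    (R l r means "l = r" is a defining relation): the congruence on words
    generated by free cancellation and the relations. *)
Inductive wequiv (X : Type) (R : word X -> word X -> Prop) : word X -> word X -> Prop :=
| we_refl w : wequiv R w w
| we_sym w1 w2 : wequiv R w1 w2 -> wequiv R w2 w1
| we_trans w1 w2 w3 : wequiv R w1 w2 -> wequiv R w2 w3 -> wequiv R w1 w3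
| we_cancel (u v : word X) (x : X) (b : bool) :
    wequiv R (u ++ (x, b) :: (x, ~~ b) :: v) (u ++ v)
| we_rel (u v l r : word X) : R l r -> wequiv R (u ++ l ++ v) (u ++ r ++ v).

(** * The group G_N^2.  Indices are 0-based: paper index i+1 <-> 'I_N element i.
    Generators: unordered pairs {i,j}, represented as (i,j) with i < j. *)
Definition genG (N : nat) := {p : 'I_N * 'I_N | (p.1 < p.2)%N}.

(** the one-letter word a_{ij} (= a_{ji}); only used for i <> j *)
Definition A (N : nat) (i j : 'I_N) : word (genG N) :=
  match (insub (if (i < j)%N then (i, j) else (j, i)) : option (genG N)) with
  | Some g => [:: (g, false)]
  | None => [::]
  end.

Inductive relG (N : nat) : word (genG N) -> word (genG N) -> Prop :=
| relG_sq (i j : 'I_N) : i != j -> relG (A i j ++ A i j) [::]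
| relG_comm (i j k l : 'I_N) : uniq [:: i; j; k; l] ->
    relG (A i j ++ A k l) (A k l ++ A i j)
| relG_tetra (i j k : 'I_N) : uniq [:: i; j; k] ->
    relG (A i j ++ A i k ++ A j k) (A j k ++ A i k ++ A i j).

Definition genGD (n : nat) := (genG n + 'I_n)%type.

Definition AD (n : nat) (i j : 'I_n) : word (genGD n) :=
  map (fun p => (inl p.1, p.2)) (A i j).

Definition T (n : nat) (i : 'I_n) : word (genGD n) := [:: (inr i, false)].

Inductive relGD (n : nat) : word (genGD n) -> word (genGD n) -> Prop :=
| relGD_sq (i j : 'I_n) : i != j -> relGD (AD i j ++ AD i j) [::]
| relGD_comm (i j k l : 'I_n) : uniq [:: i; j; k; l] ->
    relGD (AD i j ++ AD k l) (AD k l ++ AD i j)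
| relGD_tetra (i j k : 'I_n) : uniq [:: i; j; k] ->
    relGD (AD i j ++ AD i k ++ AD j k) (AD j k ++ AD i k ++ AD i j)
| relGD_tsq (i : 'I_n) : relGD (T i ++ T i) [::]
| relGD_tcomm (i j : 'I_n) : relGD (T i ++ T j) (T j ++ T i)
| relGD_ttat (i j : 'I_n) : i != j ->
    relGD (T i ++ T j ++ AD i j ++ T j ++ T i) (AD i j)
| relGD_at (i j k : 'I_n) : uniq [:: i; j; k] ->
    relGD (AD i j ++ T k) (T k ++ AD i j).

Definition omega_gen (n : nat) (g : genG n.+1) : word (genGD n) :=
  let i := (val g).1 in let j := (val g).2 in
  if (nat_of_ord j == n) then
    match (insub (nat_of_ord i) : option 'I_n) with
    | Some i' => T i' | None => [::] end
  else
    match (insub (nat_of_ord i) : option 'I_n), (insub (nat_of_ord j) : option 'I_n) with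
    | Some i', Some j' => AD i' j'
    | _, _ => [::] end.

Definition omega (n : nat) (w : word (genG n.+1)) : word (genGD n) :=
  wsubst (@omega_gen n) w.

(* Main.v *)
Require Import Defs.
From mathcomp Require Import all_boot.
Set Implicit Arguments. Unset Strict Implicit. Unset Printing Implicit Defensive.

Lemma wcong X (R : word X -> word X -> Prop) a b u v :
  wequiv R a b -> wequiv R (u ++ a ++ v) (u ++ b ++ v).
Proof.
move=> H; elim: H u v => {a b}.
- by move=> w u v; apply: we_refl.
- by move=> w1 w2 _ IH u v; apply: we_sym.
- by move=> w1 w2 w3 _ IH1 _ IH2 u v; apply: we_trans (IH1 u v) (IH2 u v).
- move=> u0 v0 x b u v.
  have -> : u ++ (u0 ++ (x, b) :: (x, ~~ b) :: v0) ++ v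
            = (u ++ u0) ++ (x, b) :: (x, ~~ b) :: (v0 ++ v) by rewrite -!catA.
  have -> : u ++ (u0 ++ v0) ++ v = (u ++ u0) ++ (v0 ++ v) by rewrite -!catA.
  exact: we_cancel.
- move=> u0 v0 l r H u v.
  have -> : u ++ (u0 ++ l ++ v0) ++ v = (u ++ u0) ++ l ++ (v0 ++ v) by rewrite -!catA.
  have -> : u ++ (u0 ++ r ++ v0) ++ v = (u ++ u0) ++ r ++ (v0 ++ v) by rewrite -!catA.
  exact: we_rel.
Qed.

Lemma wstep X (R : word X -> word X -> Prop) u l r v w1 w3 :
  w1 = u ++ l ++ v -> wequiv R l r -> wequiv R (u ++ r ++ v) w3 -> wequiv R w1 w3.
Proof. by move=> -> H1 H2; apply: we_trans (wcong u v H1) H2. Qed.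

Lemma wrl X (R : word X -> word X -> Prop) l r : R l r -> wequiv R l r.
Proof. by move=> H; have := we_rel [::] [::] H; rewrite /= !cats0. Qed.

Lemma winv_cons X (x : X * bool) w : winv (x :: w) = winv w ++ [:: (x.1, ~~ x.2)].
Proof. by rewrite /winv /= rev_cons -cats1. Qed.

Lemma winvK X (w : word X) : winv (winv w) = w.
Proof.
elim: w => [|x w IH] //.
rewrite winv_cons /winv map_cat rev_cat /= negbK -/(winv (winv w)) IH.
by case: x.
Qed.

Lemma wcancel X (R : word X -> word X -> Prop) w : wequiv R (w ++ winv w) [::].
Proof.
elim: w => [|x w IH]; first exact: we_refl.
rewrite winv_cons.
apply: (wstep (u := [:: x]) (v := [:: (x.1, ~~ x.2)]) _ IH).
  by rewrite /= catA.
case: x => x b /=; exact: (we_cancel R [::] [::] x b).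
Qed.

Lemma omega_cat n (u v : word (genG n.+1)) : omega (u ++ v) = omega u ++ omega v.
Proof. by rewrite /omega /wsubst map_cat flatten_cat. Qed.

Lemma omega_cons n (p : genG n.+1 * bool) w :
  omega (p :: w) = (if p.2 then winv (omega_gen p.1) else omega_gen p.1) ++ omega w.
Proof. by []. Qed.

Lemma A_sym N (i j : 'I_N) : A i j = A j i.
Proof. by rewrite /A; case: ltngtP => // /val_inj ->. Qed.

Lemma AD_sym n (i j : 'I_n) : AD i j = AD j i.
Proof. by rewrite /AD A_sym. Qed.

Lemma A_lt N (i j : 'I_N) (h : (i < j)%N) :
  exists g : genG N, A i j = [:: (g, false)] /\ val g = (i, j).
Proof.
rewrite /A h; case: insubP => [g _ hg | ]; first by exists g.
by rewrite /= h.
Qed.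

Lemma omega_single n (g : genG n.+1) : omega [:: (g, false)] = omega_gen g.
Proof. by rewrite /omega /wsubst /= cats0. Qed.

Notation wd := (widen_ord (leqnSn _)).

Lemma oA_ww_lt n (a b : 'I_n) : (a < b)%N -> omega (A (wd a) (wd b)) = AD a b.
Proof.
move=> h.
have [g [-> hg]] := A_lt (h : (wd a < wd b)%N).
rewrite omega_single /omega_gen hg /= (ltn_eqF (ltn_ord b)) (valK a) (valK b).
by [].
Qed.

Lemma oA_ww n (a b : 'I_n) : a != b -> omega (A (wd a) (wd b)) = AD a b.
Proof.
move=> hab; case: (ltngtP a b) => h.
- exact: oA_ww_lt.
- by rewrite A_sym AD_sym oA_ww_lt.
- by move: hab; rewrite (val_inj h) eqxx.
Qed.

Lemma oA_wm n (a : 'I_n) : omega (A (wd a) ord_max) = T a.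
Proof.
have [g [-> hg]] := A_lt (ltn_ord a : (wd a < @ord_max n)%N).
by rewrite omega_single /omega_gen hg /= eqxx (valK a).
Qed.

Lemma oA_mw n (a : 'I_n) : omega (A ord_max (wd a)) = T a.
Proof. by rewrite A_sym oA_wm. Qed.

Lemma splitI n (x : 'I_n.+1) : x = ord_max \/ exists a : 'I_n, x = wd a.
Proof.
case: (unliftP ord_max x) => [a -> | ->]; last by left.
right; exists a; apply: val_inj; by rewrite /= /bump leqNgt ltn_ord.
Qed.

Lemma wwE n (a b : 'I_n) : (wd a == wd b) = (a == b).
Proof. by []. Qed.
Lemma wmE n (a : 'I_n) : (wd a == ord_max) = false.
Proof. by apply/negbTE; rewrite -val_eqE /= neq_ltn ltn_ord. Qed.
Lemma mwE n (a : 'I_n) : (ord_max == wd a) = false.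
Proof. by rewrite eq_sym wmE. Qed.

Lemma A_diag N (i : 'I_N) : A i i = [::].
Proof. by rewrite /A ltnn; case: insubP => // g; rewrite /= ltnn. Qed.

Lemma oA_ww' n (a b : 'I_n) : omega (A (wd a) (wd b)) = AD a b.
Proof.
case: (eqVneq a b) => [->|h]; last exact: oA_ww.
by rewrite /AD !A_diag.
Qed.

Lemma omega_nil n : omega (n := n) [::] = [::].
Proof. by []. Qed.

Ltac eqw := rewrite /= -?catA /= ?cats0 /=; try reflexivity.

Lemma key1 n (a b : 'I_n) : a != b ->
  wequiv (@relGD n) (AD a b ++ T a ++ T b) (T b ++ T a ++ AD a b).
Proof.
move=> hab.
apply: (wstep (u := AD a b) (l := T a ++ T b) (v := [::]) _ (wrl (relGD_tcomm a b))).
  by eqw.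
apply: we_sym.
apply: (wstep (u := T b ++ T a) (l := AD a b) (v := [::]) _ (we_sym (wrl (relGD_ttat hab)))).
  by eqw.
apply: (wstep (u := T b) (l := T a ++ T a) (v := T b ++ AD a b ++ T b ++ T a) _ (wrl (relGD_tsq a))).
  by eqw.
apply: (wstep (u := [::]) (l := T b ++ T b) (v := AD a b ++ T b ++ T a) _ (wrl (relGD_tsq b))).
  by eqw.
eqw; exact: we_refl.
Qed.

Lemma key2 n (a c : 'I_n) : a != c ->
  wequiv (@relGD n) (T a ++ AD a c ++ T c) (T c ++ AD a c ++ T a).
Proof.
move=> hac.
apply: (wstep (u := T a) (l := AD a c) (v := T c) _ (we_sym (wrl (relGD_ttat hac)))).
  by eqw.
apply: (wstep (u := [::]) (l := T a ++ T a) (v := T c ++ AD a c ++ T c ++ T a ++ T c) _ (wrl (relGD_tsq a))).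
  by eqw.
apply: (wstep (u := T c ++ AD a c ++ T c) (l := T a ++ T c) (v := [::]) _ (wrl (relGD_tcomm a c))).
  by eqw.
apply: (wstep (u := T c ++ AD a c) (l := T c ++ T c) (v := T a) _ (wrl (relGD_tsq c))).
  by eqw.
eqw; exact: we_refl.
Qed.

Ltac breakb := repeat match goal with H : is_true (_ && _) |- _ => case/andP: H => ? ? end.
Ltac neqs := rewrite /= ?inE ?negb_or ?andbT; repeat (apply/andP; split);
  first [done | assumption | by rewrite eq_sym].
Ltac spl x := case: (splitI x) => [->|[? ->]].

Lemma relOK n (l r : word (genG n.+1)) : relG l r -> wequiv (@relGD n) (omega l) (omega r).
Proof.
case=> [i j hij | i j k l' hu | i j k hu].
- move: hij; spl i; spl j; rewrite ?wwE ?wmE ?mwE ?eqxx // => hij;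
  rewrite omega_cat omega_nil ?oA_wm ?oA_mw ?oA_ww'; apply: wrl; constructor => //.
- move: hu; spl i; spl j; spl k; spl l';
  rewrite /= ?inE ?negb_or ?wwE ?wmE ?mwE ?eqxx ?andbF ?andbT //= => hu; breakb;
  rewrite !omega_cat ?oA_wm ?oA_mw ?oA_ww';
  first [ solve [apply: wrl; apply: relGD_comm; neqs]
        | solve [apply: wrl; apply: relGD_at; neqs]
        | solve [apply: we_sym; apply: wrl; apply: relGD_at; neqs] ].
- move: hu; spl i; spl j; spl k;
  rewrite /= ?inE ?negb_or ?wwE ?wmE ?mwE ?eqxx ?andbF ?andbT //= => hu; breakb;
  rewrite !omega_cat ?oA_wm ?oA_mw ?oA_ww';
  first [ solve [apply: wrl; apply: relGD_tetra; neqs]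
        | solve [apply: key1; neqs]
        | solve [apply: key2; neqs]
        | solve [apply: we_sym; rewrite AD_sym; apply: key1; neqs] ].
Qed.

Theorem mainTheorem6 (n : nat) (hn : (2 < n)%N) (w1 w2 : word (genG n.+1)) :
  wequiv (@relG n.+1) w1 w2 -> wequiv (@relGD n) (omega w1) (omega w2).
Proof.
elim=> {w1 w2}.
- by move=> w; apply: we_refl.
- by move=> w1 w2 _ IH; apply: we_sym.
- by move=> w1 w2 w3 _ IH1 _ IH2; apply: we_trans IH1 IH2.
- move=> u v x b; rewrite !omega_cat !omega_cons /=.
  case: b => /=.
  + apply: (wstep (u := omega u) (l := winv (omega_gen x) ++ winv (winv (omega_gen x))) (r := [::]) (v := omega v)).
    * by rewrite winvK !catA.
    * exact: wcancel.
    * exact: we_refl.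
  + apply: (wstep (u := omega u) (l := omega_gen x ++ winv (omega_gen x)) (r := [::]) (v := omega v)).
    * by rewrite !catA.
    * exact: wcancel.
    * exact: we_refl.
- move=> u v l r H; rewrite !omega_cat; apply: wcong; exact: relOK.
Qed.
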